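(* Let $T$ be a minimal tree with $n$ vertices. (i) Every vertex of $T$ other than the root is either a leaf or has at least two children (i.e., no non-root vertex has degree $2$). (ii) If $n\ge 8$, then the root of $T$ has exactly two children.
   Context: A rooted tree $T$ is a finite tree with a distinguished vertex, its root; its order $|T|$ is its number of vertices. For vertices $u,v$, the infimum of $u$ and $v$ is the vertex common to the path from $u$ to the root and the path from $v$ to the root that is furthest from the root. A set $X\subseteq V(T)$ is infima closed if the infimum of any two elements of $X$ lies in $X$. $I(T)$ denotes the number of nonempty infima closed subsets of $V(T)$. For $n\ge1$, $m_n=\min\{I(T): T \text{ a rooted tree with } n \text{ vertices}\}$; a rooted tree $T$ with $I(T)=m_{|T|}$ is called minimal. *)

(* Defs.v *)
From mathcomp Require Import all_boot.
From mathcomp Require Import boolp.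

Set Implicit Arguments.
Unset Strict Implicit.
Unset Printing Implicit Defensive.

(* A rooted tree on a finite vertex type V, given by its troot and its parent
   map: the troot is its own parent and every vertex reaches the troot by
   iterating the parent map (this forces acyclicity). The order of the tree
   is #|V|. *)
Record rtree (V : finType) := RTree {
  troot : V;
  tpar : V -> V;
  par_root : tpar troot = troot;
  par_reach : forall v : V, exists k, iter k tpar v = troot
}.

Definition anc (V : finType) (T : rtree V) (a v : V) : Prop :=
  exists k, iter k (tpar T) v = a.

Definition is_inf (V : finType) (T : rtree V) (u v w : V) : Prop :=
  [/\ anc T w u, anc T w v & forall c, anc T c u -> anc T c v -> anc T c w].

Definition inf_closed (V : finType) (T : rtree V) (X : {set V}) : Prop :=
  forall u v w, u \in X -> v \in X -> is_inf T u v w -> w \in X.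

Definition Icount (V : finType) (T : rtree V) : nat :=
  #|[set X : {set V} | (X != set0) && `[< inf_closed T X >] ]|.

Definition minimal (V : finType) (T : rtree V) : Prop :=
  forall (W : finType) (T' : rtree W), #|W| = #|V| -> Icount T <= Icount T'.

Definition children (V : finType) (T : rtree V) (v : V) : {set V} :=
  [set c | (c != troot T) && (tpar T c == v)].

(* Main.v *)
Require Import Defs.
From mathcomp Require Import all_boot boolp zify.
Set Implicit Arguments.
Unset Strict Implicit.
Unset Printing Implicit Defensive.

Section Basic.
Variables (V : finType) (T : rtree V).
Local Notation r := (troot T).
Local Notation p := (tpar T).

Lemma iter_root k : iter k p r = r.
Proof. by elim: k => // k IH; rewrite iterS IH par_root. Qed.

Lemma anc_refl a : anc T a a.
Proof. by exists 0. Qed.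

Lemma anc_trans a b c : anc T a b -> anc T b c -> anc T a c.
Proof. by case=> k Hk [l Hl]; exists (k + l); rewrite iterD Hl. Qed.

Lemma anc_par x : anc T (p x) x.
Proof. by exists 1. Qed.

Lemma anc_root x : anc T r x.
Proof. exact: par_reach. Qed.

Lemma fix_root x : p x = x -> x = r.
Proof.
move=> H; have [k Hk] := par_reach T x.
suff: iter k p x = x by rewrite Hk.
by elim: k {Hk} => // k IH; rewrite iterS IH H.
Qed.

Lemma iter_mul_fix b m : iter m p b = b -> forall j, iter (j * m) p b = b.
Proof. move=> H; elim=> // j IH; by rewrite mulSn iterD IH H. Qed.

Lemma anc_antisym a b : anc T a b -> anc T b a -> a = b.
Proof.
case=> k Hk [l Hl].
case: (posnP (k + l)) => [|Hpos].
  by move/eqP; rewrite addn_eq0 => /andP[/eqP Hk0 _]; rewrite -Hk Hk0.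
have Hb : iter (k + l) p b = b by rewrite addnC iterD Hk Hl.
have [m Hm] := par_reach T b.
have := iter_mul_fix Hb m.
have -> : m * (k + l) = (m * (k + l) - m) + m.
  by rewrite subnK // leq_pmulr.
rewrite iterD Hm iter_root => Hbr.
by rewrite -Hk -Hbr iter_root.
Qed.

Lemma anc_chain a b x : anc T a x -> anc T b x -> anc T a b \/ anc T b a.
Proof.
case=> k Hk [l Hl].
case: (leqP k l) => H.
  by right; exists (l - k); rewrite -Hk -iterD subnK.
by left; exists (k - l); rewrite -Hl -iterD subnK // ltnW.
Qed.

Lemma anc_step a x : anc T a x -> a = x \/ anc T a (p x).
Proof. by case=> [[|k]] Hk; [left|right; exists k; rewrite -iterSr]. Qed.

Lemma ancP a b : reflect (anc T a b) `[< anc T a b >].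
Proof. exact: asboolP. Qed.

Definition sub u : {set V} := [set z | `[< anc T u z >]].

Lemma in_sub u z : (z \in sub u) = `[< anc T u z >].
Proof. by rewrite inE. Qed.

Lemma subP u z : reflect (anc T u z) (z \in sub u).
Proof. rewrite in_sub; exact: asboolP. Qed.

Definition ch := children T.

Lemma chP u c : reflect (c != r /\ p c = u) (c \in ch u).
Proof. rewrite inE; apply: (iffP andP) => -[? H]; split=> //; exact/eqP. Qed.

Lemma ch_anc u c : c \in ch u -> anc T u c.
Proof. by case/chP => _ <-; apply: anc_par. Qed.

Lemma ch_neq u c : c \in ch u -> c <> u.
Proof. by case/chP => /eqP Hc Hp Hcu; apply: Hc; apply: fix_root; rewrite Hp. Qed.

Lemma ch_not_anc u c : c \in ch u -> ~ anc T c u.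
Proof. move=> H Hcu; apply: (ch_neq H); apply: anc_antisym Hcu (ch_anc H). Qed.

Lemma ch_disj u c1 c2 z : c1 \in ch u -> c2 \in ch u -> anc T c1 z -> anc T c2 z -> c1 = c2.
Proof.
move=> H1 H2 A1 A2.
have Hgen : forall a b, a \in ch u -> b \in ch u -> anc T a b -> a = b.
  move=> a b Ha Hb Hab; case: (anc_step Hab) => // Hau.
  have : p b = u by case/chP: Hb.
  move=> Epb; rewrite Epb in Hau.
  by case: (ch_not_anc Ha Hau).
by case: (anc_chain A1 A2) => H; [apply: Hgen | symmetry; apply: Hgen].
Qed.

Lemma anc_child_split u z : anc T u z -> z <> u -> exists2 c, c \in ch u & anc T c z.
Proof.
case=> k; elim: k z => [|k IH] z /= Hk Hzu; first by case: Hzu.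
move: Hk => /= Hk.
case: (eqVneq (iter k p z) r) => Hr.
  by apply: IH => //; rewrite -Hk Hr par_root.
by exists (iter k p z); [apply/chP | exists k].
Qed.

Lemma sub_ch u c : c \in ch u -> sub c \subset sub u.
Proof.
move=> H; apply/subsetP => z /subP Hz; apply/subP.
exact: anc_trans (ch_anc H) Hz.
Qed.

Lemma sub_ch_lt u c : c \in ch u -> #|sub c| < #|sub u|.
Proof.
move=> H; apply: proper_card; apply/properP; split; first exact: sub_ch.
exists u; first by apply/subP/anc_refl.
by apply/subP; apply: ch_not_anc.
Qed.

Lemma tree_ind (P : V -> Prop) :
  (forall u, (forall c, c \in ch u -> P c) -> P u) -> forall u, P u.
Proof.
move=> IH u.
have : #|sub u| <= #|sub u| by [].
move: {2}#|sub u| => n; elim: n u => [|n IHn] u Hn; apply: IH => c Hc.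
  by have := sub_ch_lt Hc; rewrite ltnNge (leq_trans Hn).
by apply: IHn; rewrite -ltnS (leq_trans (sub_ch_lt Hc)).
Qed.

Lemma sub_root : sub r = setT.
Proof. by apply/setP=> z; rewrite inE in_setT; apply/asboolP/anc_root. Qed.

Lemma sub_self u : u \in sub u.
Proof. exact/subP/anc_refl. Qed.

Lemma sub_decomp u : sub u = u |: \bigcup_(c in ch u) sub c.
Proof.
apply/setP => z; rewrite in_setU1; apply/idP/idP.
  move/subP => Hz; case: (eqVneq z u) => [//|Hne].
  have [c Hc Hcz] := anc_child_split Hz (elimN eqP Hne).
  apply/orP; right; apply/bigcupP; exists c => //; exact/subP.
case/orP => [/eqP ->|/bigcupP [c Hc Hz]]; first exact: sub_self.
by move/subsetP: (sub_ch Hc); apply.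
Qed.

End Basic.

Lemma card_bigcup_disj (I U : finType) (A : {set I}) (F : I -> {set U}) :
  (forall i j, i \in A -> j \in A -> i != j -> [disjoint F i & F j]) ->
  #|\bigcup_(i in A) F i| = \sum_(i in A) #|F i|.
Proof.
move: {2}#|A| (erefl #|A|) => n; elim: n A => [|n IH] A HA Hd.
  by move/eqP: HA; rewrite cards_eq0 => /eqP ->; rewrite !big_set0 cards0.
have : 0 < #|A| by rewrite HA.
rewrite card_gt0 => /set0Pn [a Ha].
rewrite (big_setD1 a Ha) [in RHS](big_setD1 a Ha) /=.
rewrite cardsU disjoint_setI0 ?cards0 ?subn0.
  rewrite IH //.
    by move: HA; rewrite (cardsD1 a) Ha => -[].
  by move=> i j /setD1P [_ Hi] /setD1P [_ Hj]; apply: Hd.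
apply: bigcup_disjoint => i /setD1P [Hia Hi]; apply: Hd => //.
by rewrite eq_sym.
Qed.

Section Inf.
Variables (V : finType) (T : rtree V).
Local Notation r := (troot T).
Local Notation p := (tpar T).
Local Notation ch := (ch T).
Local Notation sub := (sub T).

Lemma is_inf_sym a b w : is_inf T a b w -> is_inf T b a w.
Proof. by case=> H1 H2 H3; split=> // c Hb Ha; apply: H3. Qed.

Lemma is_inf_uniq a b w1 w2 : is_inf T a b w1 -> is_inf T a b w2 -> w1 = w2.
Proof.
case=> A1 B1 C1 [A2 B2 C2]; apply: anc_antisym.
  exact: C2.
exact: C1.
Qed.

Lemma is_inf_top u b : anc T u b -> is_inf T u b u.
Proof. by move=> H; split=> //; apply: anc_refl. Qed.

Lemma is_inf_in c a b w : anc T c a -> anc T c b -> is_inf T a b w -> anc T c w.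
Proof. by move=> Ha Hb [_ _ H]; apply: H. Qed.

Lemma is_inf_ancl a b w : is_inf T a b w -> anc T w a.
Proof. by case. Qed.

Lemma is_inf_sep u c1 c2 a b : c1 \in ch u -> c2 \in ch u -> c1 <> c2 ->
  anc T c1 a -> anc T c2 b -> is_inf T a b u.
Proof.
move=> H1 H2 Hne Ha Hb; split.
- exact: anc_trans (ch_anc H1) Ha.
- exact: anc_trans (ch_anc H2) Hb.
move=> d Hda Hdb.
case: (anc_chain Hda Ha) => Hd.
  case: (anc_step Hd) => [Edc|]; last by case/chP: H1 => _ ->.
  by subst d; case: Hne; apply: ch_disj H1 H2 Hdb Hb.
case: Hne; exact: ch_disj H1 H2 (anc_trans Hd Hdb) Hb.
Qed.

Definition icl (X : {set V}) := `[< inf_closed T X >].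

Lemma iclP X : reflect (inf_closed T X) (icl X).
Proof. exact: asboolP. Qed.

Definition Sset u := [set X : {set V} | [&& X != set0, X \subset sub u & icl X]].
Definition G u := #|Sset u|.

Lemma Icount_G : Icount T = G r.
Proof.
rewrite /Icount /G; apply: eq_card => X; rewrite !inE sub_root subsetT.
by [].
Qed.

Lemma icl_set0 : icl set0.
Proof. by apply/iclP => a b w; rewrite inE. Qed.

Lemma icl_set1 u : icl [set u].
Proof.
apply/iclP => a b w; rewrite !inE => /eqP -> /eqP -> H.
by rewrite (is_inf_uniq H (is_inf_top (anc_refl _ u))).
Qed.

Lemma icl_I X c : icl X -> icl (X :&: sub c).
Proof.
move/iclP => H; apply/iclP => a b w; rewrite !inE => /andP [Ha Sa] /andP [Hb Sb] Hi.
rewrite (H a b w) //=; apply/asboolP; apply: is_inf_in Hi.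
  exact/asboolP. 
exact/asboolP.
Qed.

Lemma icl_D X c : icl X -> icl (X :\: sub c).
Proof.
move/iclP => H; apply/iclP => a b w; rewrite !inE => /andP [Sa Ha] /andP [Sb Hb] Hi.
rewrite (H a b w) // andbT; apply/negP => /asboolP Hcw.
move/negP: Sa; apply; apply/asboolP; exact: anc_trans Hcw (is_inf_ancl Hi).
Qed.

End Inf.

Section Rec.
Variables (V : finType) (T : rtree V).
Local Notation r := (troot T).
Local Notation p := (tpar T).
Local Notation ch := (ch T).
Local Notation sub := (sub T).
Local Notation G := (G T).
Local Notation Sset := (Sset T).
Local Notation icl := (icl T).

Variable u : V.

Lemma notin_sub_ch c : c \in ch u -> u \notin sub c.
Proof. by move=> Hc; apply/subP; apply: ch_not_anc. Qed.

Lemma sub_ch_disj c1 c2 z : c1 \in ch u -> c2 \in ch u -> z \in sub c1 -> z \in sub c2 -> c1 = c2.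
Proof. by move=> H1 H2 /subP A1 /subP A2; apply: ch_disj H1 H2 A1 A2. Qed.

Lemma D1 X : X \in Sset u -> u \notin X -> exists2 c, c \in ch u & X \in Sset c.
Proof.
rewrite inE => /and3P [/set0Pn [a Ha] Hsub Hicl] Hu.
have split_el : forall z, z \in X -> exists2 c, c \in ch u & z \in sub c.
  move=> z Hz; have /subP Az := subsetP Hsub z Hz.
  have Hne : z <> u by move=> E; rewrite -E Hz in Hu.
  by have [c Hc Hcz] := anc_child_split Az Hne; exists c => //; apply/subP.
have [c Hc Hac] := split_el a Ha.
exists c => //; rewrite inE Hicl andbT; apply/andP; split; first by apply/set0Pn; exists a.
apply/subsetP => b Hb; have [c' Hc' Hbc'] := split_el b Hb.
case: (eqVneq c c') => [-> //|Hne].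
have Hinf := is_inf_sep Hc Hc' (elimN eqP Hne) (elimT (subP _ _ _) Hac) (elimT (subP _ _ _) Hbc').
by move/iclP: Hicl => /(_ a b u Ha Hb Hinf) Hu'; rewrite Hu' in Hu.
Qed.

Definition E c := [set Y : {set V} | (Y \subset sub c) && icl Y].

Lemma E_card c : #|E c| = (G c).+1.
Proof.
have -> : E c = set0 |: Sset c.
  apply/setP => Y; rewrite !inE; case: (eqVneq Y set0) => [->|] /=.
    by rewrite sub0set icl_set0.
  by [].
by rewrite cardsU1 inE eqxx.
Qed.

Definition W (A : {set V}) := [set X : {set V} | [&& u \in X, X \subset u |: \bigcup_(c in A) sub c & icl X]].

Lemma W_disj (A : {set V}) a (X : {set V}) : A \subset ch u -> a \in ch u -> a \notin A -> X \in W A -> [disjoint X & sub a].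
Proof.
move=> HA Ha HaA; rewrite inE => /and3P [_ HX _].
rewrite disjoint_subset; apply/subsetP => z Hz; rewrite inE.
move: (subsetP HX z Hz); rewrite in_setU1 => /orP [/eqP ->|/bigcupP [c Hc Hzc]].
  exact: notin_sub_ch.
apply/negP => Hza.
have E' := sub_ch_disj (subsetP HA c Hc) Ha Hzc Hza.
by move: HaA; rewrite -E' Hc.
Qed.

Lemma icl_U (A : {set V}) a (X Y : {set V}) : A \subset ch u -> a \in ch u -> a \notin A -> X \in W A ->
  Y \in E a -> icl (X :|: Y).
Proof.
move=> HA Ha HaA HX; have HXd := W_disj HA Ha HaA HX.
move: HX; rewrite !inE => /and3P [HuX HXs HXi] /andP [HYs HYi].
have cross : forall z y, z \in X -> y \in Y -> is_inf T z y u.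
  move=> z y Hz Hy; have /subP Ay := subsetP HYs y Hy.
  move: (subsetP HXs z Hz); rewrite in_setU1 => /orP [/eqP ->|/bigcupP [c Hc Hzc]].
    apply: is_inf_top; exact: anc_trans (ch_anc Ha) Ay.
  apply: (is_inf_sep (subsetP HA c Hc) Ha) => //.
    by move=> E'; move: HaA; rewrite -E' Hc.
  exact/subP.
apply/iclP => b1 b2 w; rewrite !inE => /orP [H1|H1] /orP [H2|H2] Hi.
- by move/iclP: HXi => /(_ b1 b2 w H1 H2 Hi) ->.
- by rewrite (is_inf_uniq Hi (cross _ _ H1 H2)) HuX.
- by rewrite (is_inf_uniq (is_inf_sym Hi) (cross _ _ H2 H1)) HuX.
- by move/iclP: HYi => /(_ b1 b2 w H1 H2 Hi) ->; rewrite orbT.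
Qed.

Lemma W_card (A : {set V}) : A \subset ch u -> #|W A| = \prod_(c in A) (G c).+1.
Proof.
move: {2}#|A| (erefl #|A|) => n; elim: n A => [|n IH] A HA HAs.
  move/eqP: HA; rewrite cards_eq0 => /eqP ->; rewrite big_set0.
  apply/eqP/cards1P; exists [set u]; apply/setP => X; rewrite !inE.
  rewrite big_set0 setU0; apply/idP/idP.
    case/and3P => HuX Hs _; rewrite eqEsubset Hs /=.
    by rewrite sub1set.
  by move/eqP ->; rewrite set11 subxx icl_set1.
have : 0 < #|A| by rewrite HA.
rewrite card_gt0 => /set0Pn [a Ha].
set A' := A :\ a.
have HA' : #|A'| = n by move: HA; rewrite (cardsD1 a) Ha => -[].
have HA's : A' \subset ch u by apply: subset_trans (subsetDl _ _) HAs.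
have Hach : a \in ch u := subsetP HAs a Ha.
have HaA' : a \notin A' by rewrite !inE eqxx.
rewrite (big_setD1 a Ha) /= mulnC -/A' -(IH A' HA' HA's) -E_card -cardsX.
have -> : W A = [set pr.1 :|: pr.2 | pr in setX (W A') (E a)].
  apply/setP => X; apply/idP/imsetP.
    rewrite inE => /and3P [HuX HXs HXi].
    exists (X :\: sub a, X :&: sub a); last by rewrite /= setUC setID.
    have Hna := notin_sub_ch Hach; rewrite inE in Hna.
    rewrite inE /= !inE Hna HuX icl_I // icl_D // subsetIr !andbT /=.
    apply/subsetP => z; rewrite !inE => /andP [Hza Hz].
    move: (subsetP HXs z Hz); rewrite in_setU1 => /orP [->//|/bigcupP [c Hc Hzc]].
    apply/orP; right; apply/bigcupP; exists c => //.
    rewrite !inE Hc andbT; apply/negP => /eqP E'.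
    by move: Hzc; rewrite E' inE => Hzc; rewrite Hzc in Hza.
  case=> [[X0 Y]] /setXP /= [HX HY] ->.
  have Hi := icl_U HA's Hach HaA' HX HY.
  move: HX HY; rewrite !inE => /and3P [HuX HXs _] /andP [HYs _].
  rewrite HuX Hi /= andbT; apply/subsetP => z /setUP [Hz|Hz].
    move: (subsetP HXs z Hz); rewrite !in_setU1 => /orP [->//|/bigcupP [c Hc Hzc]].
    apply/orP; right; apply/bigcupP; exists c => //; move: Hc; rewrite !inE => /andP [_ ->] //.
  rewrite in_setU1; apply/orP; right; apply/bigcupP; exists a => //; exact: subsetP HYs z Hz.
apply: card_in_imset => -[X1 Y1] -[X2 Y2]; rewrite !in_setX /= => /andP [H1 H1'] /andP [H2 H2'] /= Heq.
have D1' := W_disj HA's Hach HaA' H1; have D2' := W_disj HA's Hach HaA' H2.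
move: H1' H2'; rewrite !inE => /andP [S1 _] /andP [S2 _].
have eY : forall X Y : {set V}, [disjoint X & sub a] -> Y \subset sub a -> (X :|: Y) :&: sub a = Y.
  by move=> X Y Hd Hs; rewrite setIUl (disjoint_setI0 Hd) set0U; apply/setIidPl.
have eX : forall X Y : {set V}, [disjoint X & sub a] -> Y \subset sub a -> (X :|: Y) :\: sub a = X.
  move=> X Y Hd Hs; rewrite setDUl (setDidPl Hd).
  by move: Hs; rewrite -setD_eq0 => /eqP ->; rewrite setU0.
have e1 := eY _ _ D1' S1; have e2 := eY _ _ D2' S2.
have f1 := eX _ _ D1' S1; have f2 := eX _ _ D2' S2.
rewrite Heq in e1 f1.
by rewrite -e1 -f1 e2 f2.
Qed.

Lemma G_rec : G u = \sum_(c in ch u) G c + \prod_(c in ch u) (G c).+1.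
Proof.
have HW : W (ch u) = [set X in Sset u | u \in X].
  apply/setP => X; rewrite !inE -sub_decomp.
  apply/idP/idP.
    case/and3P => HuX -> ->; rewrite HuX !andbT; apply/set0Pn; by exists u.
  by case/andP => /and3P [_ -> ->] ->.
have Hsplit : Sset u = W (ch u) :|: \bigcup_(c in ch u) Sset c.
  apply/setP => X; rewrite HW in_setU inE; apply/idP/idP.
    move=> HX; case: (boolP (u \in X)) => HuX; first by rewrite HX.
    have [c Hc HXc] := D1 HX HuX.
    by apply/orP; right; apply/bigcupP; exists c.
  case/orP => [/andP [] //|/bigcupP [c Hc]].
  rewrite !inE => /and3P [-> Hs ->]; rewrite andbT /=.
  exact: subset_trans Hs (sub_ch Hc).
rewrite /G Hsplit cardsU disjoint_setI0 ?cards0 ?subn0.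
  rewrite addnC W_card // card_bigcup_disj //.
  move=> c1 c2 H1 H2 Hne; rewrite disjoint_subset; apply/subsetP => X.
  rewrite !inE => /and3P [/set0Pn [z Hz] Hs1 _]; apply/negP => /and3P [_ Hs2 _].
  have := sub_ch_disj H1 H2 (subsetP Hs1 z Hz) (subsetP Hs2 z Hz).
  by move/eqP; rewrite (negbTE Hne).
apply: bigcup_disjoint => c Hc.
rewrite disjoint_sym disjoint_subset; apply/subsetP => X; rewrite !inE => /and3P [_ Hs _].
apply/negP => /and3P [HuX _ _].
by move: (subsetP Hs u HuX); rewrite (negbTE (notin_sub_ch Hc)).
Qed.

Lemma sub_card : #|sub u| = (\sum_(c in ch u) #|sub c|).+1.
Proof.
rewrite {1}sub_decomp cardsU1 card_bigcup_disj.
  suff -> : u \notin \bigcup_(c in ch u) sub c by [].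
  apply/bigcupP => -[c Hc Hu]; by rewrite (negbTE (notin_sub_ch Hc)) in Hu.
move=> c1 c2 H1 H2 Hne; rewrite disjoint_subset; apply/subsetP => z Hz.
rewrite inE; apply/negP => Hz2; move/eqP: Hne; apply; exact: sub_ch_disj H1 H2 Hz Hz2.
Qed.

End Rec.

Lemma sum_lt_prod (I : finType) (A : {set I}) (F : I -> nat) :
  \sum_(i in A) F i < \prod_(i in A) (F i).+1.
Proof.
apply: (big_rec2 (fun y1 y2 => y1 < y2)) => // i y1 y2 _ H.
have : 0 < y2 by apply: leq_ltn_trans H.
move=> Hy2; nia.
Qed.

Lemma prod_ge_factor (I : finType) (A : {set I}) (F : I -> nat) c :
  c \in A -> (F c).+1 <= \prod_(i in A) (F i).+1.
Proof.
move=> Hc; rewrite (bigD1 c) //=; apply: leq_pmulr; exact: prodn_gt0.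
Qed.

Section Loc.
Variables (V : finType).

Lemma G_local (T1 T2 : rtree V) u :
  (forall z, z \in sub T1 u -> ch T2 z = ch T1 z) -> G T2 u = G T1 u.
Proof.
elim/(tree_ind (T := T1)): u => u IH H.
rewrite (G_rec T2) (G_rec T1) (H u (sub_self _ _)).
have E : forall c, c \in ch T1 u -> G T2 c = G T1 c.
  move=> c Hc; apply: IH => // z Hz; apply: H.
  exact: subsetP (sub_ch Hc) z Hz.
congr (_ + _); first exact: eq_bigr.
by apply: eq_bigr => c Hc; rewrite E.
Qed.

Variables (T : rtree V) (f : V -> V).
Local Notation r := (troot T).
Local Notation p := (tpar T).
Hypothesis Hfr : f r = r.
Hypothesis Hf : forall m m', f m != p m -> f m' != p m' -> ~ anc T m' (f m).

Lemma mk_avoid z : (forall m, f m != p m -> ~ anc T m z) -> exists k, iter k f z = r.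
Proof.
move=> Hz; have [k Hk] := par_reach T z; exists k; rewrite -Hk.
elim: k {Hk} => // k IH; rewrite !iterS IH.
case: (eqVneq (f (iter k p z)) (p (iter k p z))) => // Hm.
by case: (Hz _ Hm); exists k.
Qed.

Lemma mk_reach z : exists k, iter k f z = r.
Proof.
have [k Hk] := par_reach T z; elim: k z Hk => [|k IH] z Hk.
  by exists 0.
rewrite iterSr in Hk.
case: (eqVneq (f z) (p z)) => Hm.
  by have [m Hm'] := IH _ Hk; exists m.+1; rewrite iterSr Hm.
have [m Hm'] := mk_avoid (fun m' Hm'' => Hf Hm Hm'').
by exists m.+1; rewrite iterSr.
Qed.

Definition mkT : rtree V := @RTree V r f Hfr mk_reach.

Lemma mkT_root : troot mkT = r.
Proof. by []. Qed.

Lemma ch_mkP z c : reflect (c != r /\ f c = z) (c \in ch mkT z).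
Proof. exact: (@chP V mkT z c). Qed.

Lemma ch_mk_same z : (forall m, f m != p m -> f m != z /\ p m != z) -> ch mkT z = ch T z.
Proof.
move=> H; apply/setP => c; rewrite !inE /=.
case: (eqVneq (f c) (p c)) => [->//|Hm].
by have [/negbTE -> /negbTE ->] := H c Hm; rewrite !andbF.
Qed.

Lemma G_mk_same u : (forall z, z \in sub T u -> forall m, f m != p m -> f m != z /\ p m != z) ->
  G mkT u = G T u.
Proof. by move=> H; apply: G_local => z Hz; apply: ch_mk_same; apply: H. Qed.

End Loc.

Section Facts.
Variables (V : finType) (T : rtree V).

Lemma G_gt0 u : 0 < G T u.
Proof. by rewrite G_rec; apply: ltn_addl; apply: prodn_gt0. Qed.

Lemma G_leaf u : ch T u = set0 -> G T u = 1.
Proof. by move=> H; rewrite G_rec H !big_set0. Qed.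

Lemma G_nonleaf u : ch T u != set0 -> 3 <= G T u.
Proof.
case/set0Pn => c Hc; rewrite G_rec.
have H1 : G T c <= \sum_(i in ch T u) G T i by rewrite (bigD1 c) //= leq_addr.
have H2 := prod_ge_factor (fun i => G T i) Hc.
have := G_gt0 c; lia.
Qed.

Lemma G_le2_leaf u : G T u < 3 -> ch T u = set0.
Proof. by move=> H; apply/eqP; apply: contraTT H => /G_nonleaf; rewrite -leqNgt. Qed.

Lemma leaf_sub u : ch T u = set0 -> sub T u = [set u].
Proof. by move=> H; rewrite sub_decomp H big_set0 setU0. Qed.

End Facts.

Section MoveSet.
Variables (V : finType) (T : rtree V) (M : {set V}) (g : V -> V).
Local Notation r := (troot T).
Local Notation p := (tpar T).
Hypothesis HrM : r \notin M.
Hypothesis Hg : forall m m', m \in M -> m' \in M -> ~ anc T m' (g m).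

Definition mf z := if z \in M then g z else p z.

Lemma mf_root : mf r = r.
Proof. by rewrite /mf (negbTE HrM) par_root. Qed.

Lemma mf_in m : mf m != p m -> m \in M.
Proof. by rewrite /mf; case: (m \in M); rewrite ?eqxx. Qed.

Lemma mf_ok m m' : mf m != p m -> mf m' != p m' -> ~ anc T m' (mf m).
Proof.
move=> H1 H2; have h1 := mf_in H1; have h2 := mf_in H2.
by rewrite /mf h1; apply: Hg.
Qed.

Definition mv : rtree V := mkT mf_root mf_ok.

Lemma mv_root : troot mv = r.
Proof. by []. Qed.

Lemma ch_mv z c : (c \in ch mv z) = (c != r) && (if c \in M then g c == z else p c == z).
Proof. by rewrite inE /= /mf; case: (c \in M). Qed.

Lemma ch_mv_in z c : c \in M -> (c \in ch mv z) = (g c == z).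
Proof.
move=> Hc; rewrite ch_mv Hc; have -> // : c != r.
by apply/eqP => E; move: HrM; rewrite -E Hc.
Qed.

Lemma ch_mv_out z c : c \notin M -> (c \in ch mv z) = (c \in ch T z).
Proof. by move=> Hc; rewrite ch_mv (negbTE Hc) inE. Qed.

Lemma ch_mv_same z : (forall m, m \in M -> g m != z /\ p m != z) -> ch mv z = ch T z.
Proof.
move=> H; apply/setP => c; rewrite ch_mv inE.
case: (boolP (c \in M)) => // Hc.
by have [/negbTE -> /negbTE ->] := H c Hc.
Qed.

Lemma G_mv_same u : (forall z, z \in sub T u -> forall m, m \in M -> g m != z /\ p m != z) ->
  G mv u = G T u.
Proof. by move=> H; apply: G_local => z Hz; apply: ch_mv_same; apply: H. Qed.

End MoveSet.

Section Helpers.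
Variables (V : finType) (T : rtree V).
Local Notation r := (troot T).
Local Notation p := (tpar T).

Lemma ch_neq_root u c : c \in ch T u -> c != r.
Proof. by case/chP. Qed.

Lemma ch_par u c : c \in ch T u -> p c = u.
Proof. by case/chP. Qed.

Lemma not_anc_root x : x != r -> ~ anc T x r.
Proof. by move=> Hx H; move/eqP: Hx; apply; apply: anc_antisym H (anc_root _ _). Qed.

Lemma sib_not_anc u c1 c2 : c1 \in ch T u -> c2 \in ch T u -> c1 != c2 -> ~ anc T c1 c2.
Proof. by move=> H1 H2 Hne H; move/eqP: Hne; apply; apply: ch_disj H1 H2 H (anc_refl _ _). Qed.

Lemma leaf_anc u z : ch T u = set0 -> anc T u z -> z = u.
Proof.
move=> H A; case: (eqVneq z u) => // Hne.
by have [c Hc _] := anc_child_split A (elimN eqP Hne); rewrite H inE in Hc.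
Qed.

Lemma notin_sub u z : ~ anc T u z -> z \notin sub T u.
Proof. by move=> H; apply/subP. Qed.

Lemma sub_notin_child u c z : c \in ch T u -> anc T z u -> z \notin sub T c.
Proof.
move=> Hc Huz; apply/subP => Hcz; apply: (ch_not_anc Hc); exact: anc_trans Hcz Huz.
Qed.

Lemma sub_notin_sib u c1 c2 : c1 \in ch T u -> c2 \in ch T u -> c1 != c2 -> c2 \notin sub T c1.
Proof. move=> H1 H2 Hne; apply/negP => /subP H; exact: (sib_not_anc H1 H2 Hne H). Qed.

Lemma strict_mono (A : {set V}) c0 (F1 F2 : V -> nat) :
  c0 \in A -> F1 c0 < F2 c0 -> (forall c, c \in A -> c != c0 -> F1 c = F2 c) ->
  \sum_(c in A) F1 c + \prod_(c in A) (F1 c).+1 < \sum_(c in A) F2 c + \prod_(c in A) (F2 c).+1.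
Proof.
move=> Hc0 Hlt Heq; rewrite !(big_setD1 c0 Hc0) /=.
have E1 : \sum_(c in A :\ c0) F1 c = \sum_(c in A :\ c0) F2 c.
  by apply: eq_bigr => c; rewrite !inE => /andP [H1 H2]; apply: Heq.
have E2 : \prod_(c in A :\ c0) (F1 c).+1 = \prod_(c in A :\ c0) (F2 c).+1.
  by apply: eq_bigr => c; rewrite !inE => /andP [H1 H2]; rewrite Heq.
rewrite E1 E2; have : 0 < \prod_(c in A :\ c0) (F2 c).+1 by apply: prodn_gt0.
nia.
Qed.

End Helpers.

Definition better (V : finType) (T : rtree V) :=
  exists T' : rtree V, G T' (troot T') < G T (troot T).

Section Lift.
Variables (V : finType) (T : rtree V) (x v w : V).
Local Notation r := (troot T).
Local Notation p := (tpar T).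
Hypothesis Hx : x \in ch T v.
Hypothesis Hv : v \in ch T w.

Lemma lift_vw : v != w.
Proof. by apply/eqP; apply: ch_neq Hv. Qed.

Lemma lift_not_anc : ~ anc T x w.
Proof.
move=> Hxw.
have Hwx : anc T w x := anc_trans (ch_anc Hv) (ch_anc Hx).
have Exw := anc_antisym Hxw Hwx.
have Hxv : anc T x v by rewrite Exw; apply: ch_anc Hv.
have Evx := anc_antisym (ch_anc Hx) Hxv.
by apply: (ch_neq Hx); rewrite Evx.
Qed.

Let M := [set x].
Let g := fun _ : V => w.

Lemma lift_HrM : r \notin M.
Proof. by rewrite inE eq_sym; apply: ch_neq_root Hx. Qed.

Lemma lift_Hg m m' : m \in M -> m' \in M -> ~ anc T m' (g m).
Proof. by rewrite !inE => _ /eqP ->; apply: lift_not_anc. Qed.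

Definition liftT := mv lift_HrM lift_Hg.
Local Notation T' := liftT.

Lemma lift_chw : ch T' w = x |: ch T w.
Proof.
apply/setP => c; rewrite ch_mv !inE.
case: (eqVneq c x) => [->|Hcx] /=; first by rewrite eqxx andbT; apply: ch_neq_root Hx.
by [].
Qed.

Lemma lift_chv : ch T' v = ch T v :\ x.
Proof.
apply/setP => c; rewrite ch_mv !inE.
case: (eqVneq c x) => [->|Hcx] /=; last by [].
have -> : (g x == v) = false by apply/eqP => E; move/eqP: lift_vw; apply; rewrite -E.
by rewrite andbF.
Qed.

Lemma lift_same u : w \notin sub T u -> v \notin sub T u -> G T' u = G T u.
Proof.
move=> Hw Hv'; apply: G_mv_same => z Hz m; rewrite inE => /eqP ->; rewrite /g (ch_par Hx).
split; apply/eqP => E; subst z; [by rewrite Hz in Hw | by rewrite Hz in Hv'].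
Qed.

Lemma lift_xnot : x \notin ch T w.
Proof. apply/negP => /ch_par; rewrite (ch_par Hx) => E; by move/eqP: lift_vw. Qed.

Lemma lift_w :
  \prod_(c in ch T w :\ v) (G T c).+1 * \sum_(c in ch T v :\ x) G T c
    < \prod_(c in ch T v :\ x) (G T c).+1 ->
  G T' w < G T w.
Proof.
set P := \prod_(c in ch T w :\ v) (G T c).+1.
set s := \sum_(c in ch T v :\ x) G T c.
set q := \prod_(c in ch T v :\ x) (G T c).+1.
set S := \sum_(c in ch T w :\ v) G T c.
move=> Hlt.
have Gx : G T' x = G T x.
  apply: lift_same; first by apply: notin_sub; apply: lift_not_anc.
  by apply: sub_notin_child Hx (anc_refl _ _).
have Ev : forall c, c \in ch T v :\ x -> G T' c = G T c.
  move=> c; rewrite in_setD1 => /andP [_ Hc]; apply: lift_same.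
    by apply: sub_notin_child Hc (ch_anc Hv).
  by apply: sub_notin_child Hc (anc_refl _ _).
have Ew : forall c, c \in ch T w :\ v -> G T' c = G T c.
  move=> c; rewrite in_setD1 => /andP [Hcv Hc]; apply: lift_same.
    by apply: sub_notin_child Hc (anc_refl _ _).
  by apply: sub_notin_sib Hc Hv _.
have EGv : G T v = G T x + s + (G T x).+1 * q.
  by rewrite (G_rec T v) !(big_setD1 x Hx) /= addnA.
have EG'v : G T' v = s + q.
  rewrite (G_rec T' v) lift_chv (eq_bigr (G T) Ev).
  by rewrite (eq_bigr (fun c => (G T c).+1) (fun c Hc => congr1 succn (Ev c Hc))).
have EGw : G T w = G T v + S + (G T v).+1 * P.
  by rewrite (G_rec T w) !(big_setD1 v Hv) /= addnA.
have EG'w : G T' w = G T x + (G T' v + S) + (G T x).+1 * ((G T' v).+1 * P).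
  rewrite (G_rec T' w) lift_chw !(big_setU1 _ lift_xnot) /= Gx.
  rewrite !(big_setD1 v Hv) /= (eq_bigr (G T) Ew).
  by rewrite (eq_bigr (fun c => (G T c).+1) (fun c Hc => congr1 succn (Ew c Hc))).
rewrite EG'w EG'v EGw EGv.
have : 0 < G T x by apply: G_gt0.
have : 0 < P by apply: prodn_gt0.
nia.
Qed.

Lemma lift_prop : G T' w < G T w -> forall u, anc T u w -> G T' u < G T u.
Proof.
move=> Hw; elim/(tree_ind (T := T)) => u IH Hu.
case: (eqVneq u w) => [-> //|Hne].
have [c0 Hc0 Hc0w] := anc_child_split Hu (fun E => elimN eqP Hne (esym E)).
have Huv : u != v.
  apply/eqP => E; subst u; apply: (ch_neq Hv); exact: anc_antisym Hu (ch_anc Hv).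
have Hchu : ch T' u = ch T u.
  apply: ch_mv_same => m; rewrite inE => /eqP ->; rewrite /g (ch_par Hx).
  by rewrite eq_sym Hne eq_sym Huv.
have Hlt := IH c0 Hc0 Hc0w.
rewrite (G_rec T' u) (G_rec T u) Hchu; eapply strict_mono; [exact Hc0 | exact Hlt | ].
move=> c Hc Hcc0; apply: lift_same.
  apply/negP => /subP Hcw; move/eqP: Hcc0; apply; exact: ch_disj Hc Hc0 Hcw Hc0w.
apply/negP => /subP Hcv; case: (anc_step Hcv) => [Ecv|].
  by subst c; move/eqP: Hne; apply; rewrite -(ch_par Hc) (ch_par Hv).
rewrite (ch_par Hv) => Hcw; move/eqP: Hcc0; apply; exact: ch_disj Hc Hc0 Hcw Hc0w.
Qed.

Lemma lift_better :
  \prod_(c in ch T w :\ v) (G T c).+1 * \sum_(c in ch T v :\ x) G T c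
    < \prod_(c in ch T v :\ x) (G T c).+1 -> better T.
Proof.
move=> H; exists T'; rewrite mv_root; apply: lift_prop (lift_w H) _ (anc_root _ _).
Qed.

End Lift.

Section MoveA.
Variables (V : finType) (T : rtree V) (ci cj : V).
Local Notation r := (troot T).
Local Notation p := (tpar T).
Hypothesis Hi : ci \in ch T r.
Hypothesis Hj : cj \in ch T r.
Hypothesis Hij : ci != cj.

Let M := [set cj].
Let g := fun _ : V => ci.

Lemma A_HrM : r \notin M.
Proof. by rewrite inE eq_sym; apply: ch_neq_root Hj. Qed.

Lemma A_Hg m m' : m \in M -> m' \in M -> ~ anc T m' (g m).
Proof. by rewrite !inE => _ /eqP ->; apply: sib_not_anc Hj Hi _; rewrite eq_sym. Qed.

Definition AT := mv A_HrM A_Hg.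
Local Notation T' := AT.

Lemma A_same u : ci \notin sub T u -> r \notin sub T u -> G T' u = G T u.
Proof.
move=> H1 H2; apply: G_mv_same => z Hz m; rewrite inE => /eqP ->; rewrite /g (ch_par Hj).
split; apply/eqP => E; subst z; [by rewrite Hz in H1 | by rewrite Hz in H2].
Qed.

Lemma A_better :
  \prod_(c in ch T ci) (G T c).+1 <
    \prod_(c in (ch T r :\ cj) :\ ci) (G T c).+1 * \sum_(c in ch T ci) G T c ->
  better T.
Proof.
set Q := \prod_(c in (ch T r :\ cj) :\ ci) (G T c).+1.
set s := \sum_(c in ch T ci) G T c.
set q := \prod_(c in ch T ci) (G T c).+1.
set S0 := \sum_(c in (ch T r :\ cj) :\ ci) G T c.
move=> Hlt; exists T'; rewrite mv_root.
have Hir : ci != r by apply: ch_neq_root Hi.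
have chci : ch T' ci = cj |: ch T ci.
  apply/setP => c; rewrite ch_mv !inE.
  case: (eqVneq c cj) => [->|Hc] /=; first by rewrite eqxx andbT; apply: ch_neq_root Hj.
  by [].
have chr : ch T' r = ch T r :\ cj.
  apply/setP => c; rewrite ch_mv !inE.
  case: (eqVneq c cj) => [->|Hc] /=; last by [].
  by rewrite /g (negbTE Hir) andbF.
have Hcj : cj \notin ch T ci.
  by apply/negP => /ch_par; rewrite (ch_par Hj) => E; move/eqP: Hir; rewrite E.
have Gcj : G T' cj = G T cj.
  apply: A_same; first by apply: sub_notin_sib Hj Hi _; rewrite eq_sym.
  exact: sub_notin_child Hj (anc_refl _ _).
have Eci : forall c, c \in ch T ci -> G T' c = G T c.
  move=> c Hc; apply: A_same; first exact: sub_notin_child Hc (anc_refl _ _).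
  exact: sub_notin_child Hc (anc_root _ _).
have ER : forall c, c \in (ch T r :\ cj) :\ ci -> G T' c = G T c.
  move=> c; rewrite !in_setD1 => /and3P [Hci _ Hc]; apply: A_same.
    by apply: sub_notin_sib Hc Hi _.
  exact: sub_notin_child Hc (anc_refl _ _).
have EGci : G T ci = s + q by rewrite G_rec.
have EG'ci : G T' ci = G T cj + s + (G T cj).+1 * q.
  rewrite (G_rec T' ci) chci !(big_setU1 _ Hcj) /= Gcj (eq_bigr (G T) Eci).
  by rewrite (eq_bigr (fun c => (G T c).+1) (fun c Hc => congr1 succn (Eci c Hc))) addnA.
have Hi' : ci \in ch T r :\ cj by rewrite in_setD1 Hij Hi.
have EGr : G T r = G T cj + (G T ci + S0) + (G T cj).+1 * ((G T ci).+1 * Q).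
  by rewrite (G_rec T r) !(big_setD1 cj Hj) /= !(big_setD1 ci Hi') /=.
have EG'r : G T' r = G T' ci + S0 + (G T' ci).+1 * Q.
  rewrite (G_rec T' r) chr !(big_setD1 ci Hi') /= (eq_bigr (G T) ER).
  by rewrite (eq_bigr (fun c => (G T c).+1) (fun c Hc => congr1 succn (ER c Hc))) addnA.
rewrite EG'r EGr EG'ci EGci.
have : 0 < G T cj by apply: G_gt0.
nia.
Qed.

End MoveA.

Section Gather.
Variables (V : finType) (T : rtree V) (l1 l2 l3 : V).
Local Notation r := (troot T).
Local Notation p := (tpar T).
Hypothesis H1 : l1 \in ch T r.
Hypothesis H2 : l2 \in ch T r.
Hypothesis H3 : l3 \in ch T r.
Hypothesis N12 : l1 != l2.
Hypothesis N13 : l1 != l3.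
Hypothesis N23 : l2 != l3.
Hypothesis L1 : ch T l1 = set0.
Hypothesis L2 : ch T l2 = set0.
Hypothesis L3 : ch T l3 = set0.

Local Notation M := [set l2; l3].
Local Notation g := (fun _ : V => l1).

Lemma Ga_HrM : r \notin M.
Proof.
by rewrite !inE !(eq_sym r) (negbTE (ch_neq_root H2)) (negbTE (ch_neq_root H3)).
Qed.

Lemma Ga_Hg m m' : m \in M -> m' \in M -> ~ anc T m' (g m).
Proof.
move=> _; rewrite !inE => /orP [] /eqP ->.
  by apply: (sib_not_anc H2 H1); rewrite eq_sym.
by apply: (sib_not_anc H3 H1); rewrite eq_sym.
Qed.

Definition GaT := mv Ga_HrM Ga_Hg.
Local Notation T' := GaT.

Lemma Ga_pm m : m \in M -> p m = r.
Proof. by rewrite !inE => /orP [] /eqP ->; apply: ch_par. Qed.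

Lemma Ga_same u : l1 \notin sub T u -> r \notin sub T u -> G T' u = G T u.
Proof.
move=> Ha Hb; apply: G_mv_same => z Hz m Hm; rewrite (Ga_pm Hm).
split; apply/eqP => E; subst z; [by rewrite Hz in Ha | by rewrite Hz in Hb].
Qed.

Lemma Ga_leaf l : l \in M -> G T' l = 1.
Proof.
move=> Hl; apply: G_leaf.
have -> : ch T' l = ch T l.
  apply: ch_mv_same => m Hm; rewrite (Ga_pm Hm); split.
    by move: Hl; rewrite !inE => /orP [] /eqP ->.
  move: Hl; rewrite !inE => /orP [] /eqP ->; rewrite eq_sym; [apply: ch_neq_root H2|apply: ch_neq_root H3].
by move: Hl; rewrite !inE => /orP [] /eqP ->.
Qed.

Lemma Ga_better :
  4 <= \prod_(c in ((ch T r :\ l1) :\ l2) :\ l3) (G T c).+1 -> better T.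
Proof.
set R := ((ch T r :\ l1) :\ l2) :\ l3.
set P0 := \prod_(c in R) (G T c).+1.
set S0 := \sum_(c in R) G T c.
move=> HP; exists T'; rewrite mv_root.
have Hl1r : (l1 == r) = false by apply/negbTE; apply: ch_neq_root H1.
have chl1 : ch T' l1 = [set l2; l3].
  apply/setP => c; case: (boolP (c \in M)) => Hc.
    by rewrite ch_mv_in //= eqxx.
  by rewrite ch_mv_out // L1 inE.
have chr : ch T' r = (ch T r :\ l2) :\ l3.
  apply/setP => c; case: (boolP (c \in M)) => Hc.
    rewrite ch_mv_in //= Hl1r; move: Hc; rewrite !inE => /orP [] /eqP ->;
    by rewrite ?eqxx ?andbF.
  rewrite ch_mv_out //; move: Hc; rewrite !inE negb_or => /andP [A B].
  by rewrite A B.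
have EG'l1 : G T' l1 = 6.
  rewrite (G_rec T' l1) chl1 !big_setU1 ?inE //= !big_set1 !Ga_leaf //.
    by rewrite !inE eqxx orbT.
  by rewrite !inE eqxx.
have ER : forall c, c \in R -> G T' c = G T c.
  move=> c; rewrite !in_setD1 => /and4P [_ _ Hc1 Hc]; apply: Ga_same.
    by apply: sub_notin_sib Hc H1 Hc1.
  exact: sub_notin_child Hc (anc_refl _ _).
have H2' : l2 \in ch T r :\ l1 by rewrite in_setD1 eq_sym N12 H2.
have H3' : l3 \in (ch T r :\ l1) :\ l2 by rewrite !in_setD1 eq_sym N23 eq_sym N13 H3.
have EGr : G T r = 1 + (1 + (1 + S0)) + 2 * (2 * (2 * P0)).
  rewrite (G_rec T r) !(big_setD1 l1 H1) /= !(big_setD1 l2 H2') /= !(big_setD1 l3 H3') /=.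
  by rewrite !G_leaf.
have H1' : l1 \in (ch T r :\ l2) :\ l3 by rewrite !in_setD1 N13 N12 H1.
have ER' : ((ch T r :\ l2) :\ l3) :\ l1 = R.
  apply/setP => c; rewrite !in_setD1.
  by case: (c == l1); case: (c == l2); case: (c == l3).
have EG'r : G T' r = 6 + S0 + 7 * P0.
  rewrite (G_rec T' r) chr !(big_setD1 l1 H1') /= ER' EG'l1 (eq_bigr (G T) ER).
  by rewrite (eq_bigr (fun c => (G T c).+1) (fun c Hc => congr1 succn (ER c Hc))) addnA.
rewrite EG'r EGr; lia.
Qed.

End Gather.

Section Swap.
Variables (V : finType) (T : rtree V) (c l1 l2 X : V).
Local Notation r := (troot T).
Local Notation p := (tpar T).
Hypothesis Hch : ch T r = [set c; l1; l2].
Hypothesis Nc1 : c != l1.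
Hypothesis Nc2 : c != l2.
Hypothesis N12 : l1 != l2.
Hypothesis L1 : ch T l1 = set0.
Hypothesis L2 : ch T l2 = set0.
Hypothesis HX : X \in ch T c.
Hypothesis GX : 3 <= G T X.

Lemma Sw_Hc : c \in ch T r. Proof. by rewrite Hch !inE eqxx. Qed.
Lemma Sw_H1 : l1 \in ch T r. Proof. by rewrite Hch !inE eqxx orbT. Qed.
Lemma Sw_H2 : l2 \in ch T r. Proof. by rewrite Hch !inE eqxx !orbT. Qed.

Lemma Sw_cr : (c == r) = false. Proof. exact/negbTE/(ch_neq_root Sw_Hc). Qed.
Lemma Sw_Xr : (X == r) = false. Proof. exact/negbTE/(ch_neq_root HX). Qed.
Lemma Sw_X1 : (X == l1) = false.
Proof. apply/negbTE/eqP => E; have := ch_par HX; rewrite E (ch_par Sw_H1) => E'; by move: Sw_cr; rewrite E' eqxx. Qed.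
Lemma Sw_X2 : (X == l2) = false.
Proof. apply/negbTE/eqP => E; have := ch_par HX; rewrite E (ch_par Sw_H2) => E'; by move: Sw_cr; rewrite E' eqxx. Qed.
Lemma Sw_1X : (l1 == X) = false. Proof. by rewrite eq_sym Sw_X1. Qed.
Lemma Sw_2X : (l2 == X) = false. Proof. by rewrite eq_sym Sw_X2. Qed.
Lemma Sw_1c : (l1 == c) = false. Proof. by rewrite eq_sym; apply/negbTE. Qed.
Lemma Sw_2c : (l2 == c) = false. Proof. by rewrite eq_sym; apply/negbTE. Qed.
Lemma Sw_Xc : (X == c) = false.
Proof. by apply/negbTE/eqP; apply: ch_neq HX. Qed.

Local Notation M := [set X; l1; l2].
Local Notation g := (fun m : V => if m == X then r else c).

Lemma Sw_HrM : r \notin M.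
Proof.
rewrite !inE !(eq_sym r) Sw_Xr.
by rewrite (negbTE (ch_neq_root Sw_H1)) (negbTE (ch_neq_root Sw_H2)).
Qed.

Lemma Sw_notanc m' : m' \in M -> ~ anc T m' r /\ ~ anc T m' c.
Proof.
rewrite !inE => /orP [/orP [] | ] /eqP ->.
- split; first by apply: not_anc_root; rewrite Sw_Xr.
  exact: ch_not_anc HX.
- split; first by apply: not_anc_root; apply: ch_neq_root Sw_H1.
  by apply: sib_not_anc Sw_H1 Sw_Hc _; rewrite eq_sym.
- split; first by apply: not_anc_root; apply: ch_neq_root Sw_H2.
  by apply: sib_not_anc Sw_H2 Sw_Hc _; rewrite eq_sym.
Qed.

Lemma Sw_Hg m m' : m \in M -> m' \in M -> ~ anc T m' (g m).
Proof. by move=> _ Hm'; have [A B] := Sw_notanc Hm'; case: (m == X). Qed.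

Definition SwT := mv Sw_HrM Sw_Hg.
Local Notation T' := SwT.

Lemma Sw_gp m : m \in M -> (g m = r \/ g m = c) /\ (p m = r \/ p m = c).
Proof.
have e1 : (l1 == X) = false by rewrite eq_sym Sw_X1.
have e2 : (l2 == X) = false by rewrite eq_sym Sw_X2.
rewrite !inE => /orP [/orP [] | ] /eqP ->.
- by rewrite eqxx; split; [left | right; apply: ch_par HX].
- by rewrite e1; split; [right | left; apply: ch_par Sw_H1].
- by rewrite e2; split; [right | left; apply: ch_par Sw_H2].
Qed.

Lemma Sw_same u : r \notin sub T u -> c \notin sub T u -> G T' u = G T u.
Proof.
move=> Ha Hb; apply: G_mv_same => z Hz m Hm.
have Hzr : z != r by apply/eqP => E; move: Hz; rewrite E (negbTE Ha).
have Hzc : z != c by apply/eqP => E; move: Hz; rewrite E (negbTE Hb).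
by have [[] E1 [] E2] := Sw_gp Hm; rewrite E1 E2; split; rewrite eq_sym.
Qed.

Lemma Sw_leaf l : l \in [set l1; l2] -> G T' l = 1.
Proof.
move=> Hl; apply: G_leaf.
have Hlr : l != r by move: Hl; rewrite !inE => /orP [] /eqP ->; [apply: ch_neq_root Sw_H1 | apply: ch_neq_root Sw_H2].
have Hlc : l != c by move: Hl; rewrite !inE => /orP [] /eqP ->; rewrite eq_sym.
have -> : ch T' l = ch T l.
  apply: ch_mv_same => m Hm; have [[] E1 [] E2] := Sw_gp Hm; rewrite E1 E2; split; by rewrite eq_sym.
by move: Hl; rewrite !inE => /orP [] /eqP ->.
Qed.

Lemma Sw_better : better T.
Proof.
exists T'; rewrite mv_root.
set s := \sum_(d in ch T c :\ X) G T d.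
set q := \prod_(d in ch T c :\ X) (G T d).+1.
have chr : ch T' r = [set X; c].
  apply/setP => e; case: (boolP (e \in M)) => He.
    rewrite ch_mv_in //=; move: He; rewrite !inE => /orP [/orP [] | ] /eqP ->.
    + by rewrite !eqxx.
    + by rewrite Sw_1X Sw_cr Sw_1c.
    + by rewrite Sw_2X Sw_cr Sw_2c.
  rewrite ch_mv_out // Hch; move: He; rewrite !inE !negb_or => /andP [/andP [A B] C].
  by rewrite (negbTE A) (negbTE B) (negbTE C) !orbF.
have chc : ch T' c = l1 |: (l2 |: (ch T c :\ X)).
  apply/setP => e; case: (boolP (e \in M)) => He.
    rewrite ch_mv_in //=; move: He; rewrite !inE => /orP [/orP [] | ] /eqP ->.
    + by rewrite eqxx (eq_sym r) Sw_cr Sw_X1 Sw_X2.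
    + by rewrite Sw_1X !eqxx.
    + by rewrite Sw_2X !eqxx orbT.
  rewrite ch_mv_out //; move: He; rewrite !inE !negb_or => /andP [/andP [A B] C].
  by rewrite (negbTE A) (negbTE B) (negbTE C).
have GX' : G T' X = G T X.
  apply: Sw_same; first exact: sub_notin_child HX (anc_root _ _).
  exact: sub_notin_child HX (anc_refl _ _).
have Ed : forall d, d \in ch T c :\ X -> G T' d = G T d.
  move=> d; rewrite in_setD1 => /andP [_ Hd]; apply: Sw_same.
    exact: sub_notin_child Hd (anc_root _ _).
  exact: sub_notin_child Hd (anc_refl _ _).
have n1 : l1 \notin l2 |: (ch T c :\ X).
  rewrite in_setU1 in_setD1 (negbTE N12) /=; apply/negP => /andP [_ /ch_par].
  by rewrite (ch_par Sw_H1) => E; move: Sw_cr; rewrite -E eqxx.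
have n2 : l2 \notin ch T c :\ X.
  rewrite in_setD1; apply/negP => /andP [_ /ch_par].
  by rewrite (ch_par Sw_H2) => E; move: Sw_cr; rewrite -E eqxx.
have EG'c : G T' c = 1 + (1 + s) + 2 * (2 * q).
  rewrite (G_rec T' c) chc !(big_setU1 _ n1) /= !(big_setU1 _ n2) /= !Sw_leaf ?inE ?eqxx ?orbT //.
  rewrite (eq_bigr (G T) Ed).
  by rewrite (eq_bigr (fun c => (G T c).+1) (fun c Hc => congr1 succn (Ed c Hc))).
have nX : X \notin [set c] by rewrite inE Sw_Xc.
have EG'r : G T' r = G T X + G T' c + (G T X).+1 * (G T' c).+1.
  by rewrite (G_rec T' r) chr !(big_setU1 _ nX) /= !big_set1 GX'.
have EGc : G T c = G T X + s + (G T X).+1 * q.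
  by rewrite (G_rec T c) !(big_setD1 X HX) /= addnA.
have nc : c \notin [set l1; l2] by rewrite !inE negb_or Nc1 Nc2.
have n1' : l1 \notin [set l2] by rewrite inE N12.
have EGr : G T r = G T c + (1 + 1) + (G T c).+1 * (2 * 2).
  rewrite (G_rec T r) Hch -setUA !(big_setU1 _ nc) /= !(big_setU1 _ n1') /= !big_set1.
  by rewrite (G_leaf L1) (G_leaf L2).
have Hsq : s < q by apply: sum_lt_prod.
rewrite EG'r EG'c EGr EGc.
move: GX Hsq; set x := G T X => Hx Hsq.
have [y ->] : exists y, x = y + 3 by exists (x - 3); lia.
nia.
Qed.

End Swap.

Lemma pow_bound t : 3 <= t -> 3 * t + 2 < 2 * 2 ^ t.
Proof.
move=> Ht; have [k ->] : exists k, t = k + 3 by exists (t - 3); lia.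
elim: k => [|k IH]; first by [].
rewrite addSn expnS; lia.
Qed.

Section Spec.
Variables (V : finType) (T : rtree V) (c l1 l2 d : V).
Local Notation r := (troot T).
Local Notation p := (tpar T).
Hypothesis Hch : ch T r = [set c; l1; l2].
Hypothesis Nc1 : c != l1.
Hypothesis Nc2 : c != l2.
Hypothesis N12 : l1 != l2.
Hypothesis L1 : ch T l1 = set0.
Hypothesis L2 : ch T l2 = set0.
Hypothesis Hd : d \in ch T c.
Hypothesis Lc : forall e, e \in ch T c -> ch T e = set0.
Hypothesis Hm4 : 4 <= #|ch T c|.

Lemma Sp_Hc : c \in ch T r. Proof. by rewrite Hch !inE eqxx. Qed.
Lemma Sp_H1 : l1 \in ch T r. Proof. by rewrite Hch !inE eqxx orbT. Qed.
Lemma Sp_H2 : l2 \in ch T r. Proof. by rewrite Hch !inE eqxx !orbT. Qed.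
Lemma Sp_cr : (c == r) = false. Proof. exact/negbTE/(ch_neq_root Sp_Hc). Qed.
Lemma Sp_1r : (l1 == r) = false. Proof. exact/negbTE/(ch_neq_root Sp_H1). Qed.
Lemma Sp_2r : (l2 == r) = false. Proof. exact/negbTE/(ch_neq_root Sp_H2). Qed.
Lemma Sp_1c : (l1 == c) = false. Proof. by rewrite eq_sym; apply/negbTE. Qed.
Lemma Sp_2c : (l2 == c) = false. Proof. by rewrite eq_sym; apply/negbTE. Qed.
Lemma Sp_21 : (l2 == l1) = false. Proof. by rewrite eq_sym; apply/negbTE. Qed.

Lemma Sp_chc_r e : e \in ch T c -> [/\ (e == r) = false, (e == l1) = false, (e == l2) = false & (e == c) = false].
Proof.
move=> He; have Hp := ch_par He.
have Er : (e == r) = false by apply/negbTE; apply: ch_neq_root He.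
have E1 : (e == l1) = false.
  by apply/negbTE/eqP => E; move: Hp; rewrite E (ch_par Sp_H1) => E'; move: Sp_cr; rewrite E' eqxx.
have E2 : (e == l2) = false.
  by apply/negbTE/eqP => E; move: Hp; rewrite E (ch_par Sp_H2) => E'; move: Sp_cr; rewrite E' eqxx.
have Ec : (e == c) = false by apply/negbTE/eqP; apply: ch_neq He.
by [].
Qed.

Lemma Sp_dr : (d == r) = false. Proof. by have [-> _ _ _] := Sp_chc_r Hd. Qed.
Lemma Sp_d1 : (d == l1) = false. Proof. by have [_ -> _ _] := Sp_chc_r Hd. Qed.
Lemma Sp_d2 : (d == l2) = false. Proof. by have [_ _ -> _] := Sp_chc_r Hd. Qed.
Lemma Sp_dc : (d == c) = false. Proof. by have [_ _ _ ->] := Sp_chc_r Hd. Qed.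

Local Notation M := [set l2; d].
Local Notation g := (fun _ : V => l1).

Lemma Sp_HrM : r \notin M.
Proof. by rewrite !inE !(eq_sym r) Sp_2r Sp_dr. Qed.

Lemma Sp_Hg m m' : m \in M -> m' \in M -> ~ anc T m' (g m).
Proof.
move=> _; rewrite !inE => /orP [] /eqP ->.
  by apply: (sib_not_anc Sp_H2 Sp_H1); rewrite Sp_21.
move=> Hdl; have Hcl := anc_trans (ch_anc Hd) Hdl.
have := ch_disj Sp_Hc Sp_H1 Hcl (anc_refl _ _); move/eqP; by rewrite (negbTE Nc1).
Qed.

Definition SpT := mv Sp_HrM Sp_Hg.
Local Notation T' := SpT.

Lemma Sp_pm m : m \in M -> p m = r \/ p m = c.
Proof.
rewrite !inE => /orP [] /eqP ->; [left; apply: ch_par Sp_H2 | right; apply: ch_par Hd].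
Qed.

Lemma Sp_same_ch z : z != l1 -> z != r -> z != c -> ch T' z = ch T z.
Proof.
move=> A B C; apply: ch_mv_same => m Hm; split; first by rewrite eq_sym.
by case: (Sp_pm Hm) => ->; rewrite eq_sym.
Qed.

Lemma Sp_leaf e : ch T e = set0 -> e != l1 -> e != r -> e != c -> G T' e = 1.
Proof. by move=> L A B C; apply: G_leaf; rewrite Sp_same_ch. Qed.

Lemma Sp_better : better T.
Proof.
exists T'; rewrite mv_root.
set t := #|ch T c :\ d|.
have Ht : #|ch T c| = t.+1 by rewrite (cardsD1 d) Hd.
have chr : ch T' r = [set c; l1].
  apply/setP => e; case: (boolP (e \in M)) => He.
    rewrite ch_mv_in //= Sp_1r; move: He; rewrite !inE => /orP [] /eqP ->.
      by rewrite Sp_2c Sp_21.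
    by rewrite Sp_dc Sp_d1.
  rewrite ch_mv_out // Hch; move: He; rewrite !inE negb_or => /andP [A B].
  by rewrite (negbTE A) orbF.
have chl1 : ch T' l1 = [set l2; d].
  apply/setP => e; case: (boolP (e \in M)) => He.
    by rewrite ch_mv_in //= eqxx.
  by rewrite ch_mv_out // L1 inE.
have chc : ch T' c = ch T c :\ d.
  apply/setP => e; case: (boolP (e \in M)) => He.
    rewrite ch_mv_in //= Sp_1c; move: He; rewrite !inE => /orP [] /eqP ->.
      by rewrite (ch_par Sp_H2) (eq_sym r) Sp_cr !andbF.
    by rewrite eqxx.
  rewrite ch_mv_out // in_setD1; move: He; rewrite !inE negb_or => /andP [A B].
  by rewrite B.
have Gl2 : G T' l2 = 1 by apply: Sp_leaf => //; rewrite ?Sp_21 ?Sp_2r ?Sp_2c.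
have Gd : G T' d = 1 by apply: Sp_leaf; [apply: Lc Hd | rewrite Sp_d1 | rewrite Sp_dr | rewrite Sp_dc].
have EG'l1 : G T' l1 = 6.
  have nl2 : l2 \notin [set d] by rewrite inE eq_sym Sp_d2.
  by rewrite (G_rec T' l1) chl1 !(big_setU1 _ nl2) /= !big_set1 Gl2 Gd.
have E1 : forall e, e \in ch T c :\ d -> G T' e = 1.
  move=> e; rewrite in_setD1 => /andP [_ He]; have [A B _ C] := Sp_chc_r He.
  by apply: Sp_leaf; [apply: Lc He | rewrite B | rewrite A | rewrite C].
have E0 : forall e, e \in ch T c -> G T e = 1 by move=> e He; apply: G_leaf; apply: Lc.
have EG'c : G T' c = t + 2 ^ t.
  rewrite (G_rec T' c) chc (eq_bigr (fun _ => 1) E1).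
  rewrite (eq_bigr (fun _ => 2) (fun e He => congr1 succn (E1 e He))).
  by rewrite sum_nat_const prod_nat_const muln1.
have EGc : G T c = t.+1 + 2 ^ t.+1.
  rewrite (G_rec T c) (eq_bigr (fun _ => 1) E0).
  rewrite (eq_bigr (fun _ => 2) (fun e He => congr1 succn (E0 e He))).
  by rewrite sum_nat_const prod_nat_const muln1 Ht.
have nc : c \notin [set l1] by rewrite inE.
have EG'r : G T' r = G T' c + 6 + (G T' c).+1 * 7.
  by rewrite (G_rec T' r) chr !(big_setU1 _ nc) /= !big_set1 EG'l1.
have nc' : c \notin [set l1; l2] by rewrite !inE negb_or Nc1 Nc2.
have n1' : l1 \notin [set l2] by rewrite inE N12.
have EGr : G T r = G T c + (1 + 1) + (G T c).+1 * (2 * 2).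
  rewrite (G_rec T r) Hch -setUA !(big_setU1 _ nc') /= !(big_setU1 _ n1') /= !big_set1.
  by rewrite (G_leaf L1) (G_leaf L2).
rewrite EG'r EGr EG'c EGc expnS.
have Ht3 : 3 <= t by lia.
have := pow_bound Ht3; lia.
Qed.

End Spec.

Section Main.
Variables (V : finType) (T : rtree V).
Local Notation r := (troot T).
Local Notation p := (tpar T).
Hypothesis Hnb : ~ better T.

Lemma part_i v : v != r -> #|children T v| != 1.
Proof.
move=> Hv; apply/negP => /cards1P [x Hx].
have Hxv : x \in ch T v by rewrite /ch Hx set11.
have Hvw : v \in ch T (p v) by apply/chP.
apply: Hnb; apply: (lift_better Hxv Hvw).
have -> : ch T v :\ x = set0 by rewrite /ch Hx setDv.
by rewrite !big_set0 muln0.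
Qed.

Lemma size_V : #|V| = (\sum_(c in ch T r) #|sub T c|).+1.
Proof. by rewrite -sub_card sub_root cardsT. Qed.

Lemma leaf_card u : ch T u = set0 -> #|sub T u| = 1.
Proof. by move=> H; rewrite leaf_sub // cards1. Qed.

Lemma leaves_card u : (forall e, e \in ch T u -> ch T e = set0) -> #|sub T u| = #|ch T u|.+1.
Proof.
move=> H; rewrite sub_card (eq_bigr (fun _ => 1)) ?sum_nat_const ?muln1 //.
by move=> e He; apply: leaf_card; apply: H.
Qed.

Lemma cD1 (A : {set V}) a : a \in A -> #|A :\ a| = #|A| - 1.
Proof. by move=> Ha; rewrite (cardsD1 a A) Ha add1n subSS subn0. Qed.

Lemma part_ii : 8 <= #|V| -> #|children T r| = 2.
Proof.
move=> H8; have Hsz := size_V.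
case: (ltngtP #|ch T r| 2) => Hk //.
- (* k < 2 *)
  move: Hk; rewrite ltnS leq_eqVlt ltnS leqn0 => /orP [/cards1P [c Hc]|Hk0].
    have Hcin : c \in ch T r by rewrite Hc set11.
    rewrite Hc big_set1 in Hsz.
    have [x Hx] : exists x, x \in ch T c.
      apply/set0Pn/negP => /eqP L; move: Hsz; rewrite leaf_card // => E.
      by move: H8; rewrite E.
    exfalso; apply: Hnb; apply: (lift_better Hx Hcin).
    have -> : ch T r :\ c = set0 by rewrite Hc setDv.
    by rewrite big_set0 mul1n; apply: sum_lt_prod.
  exfalso; move: Hk0; rewrite cards_eq0 => /eqP E.
  by move: Hsz; rewrite E big_set0 => E'; move: H8; rewrite E'.
- (* k >= 3 *)
  exfalso; apply: Hnb.
  have [c0 Hc0] : exists c0, c0 \in ch T r.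
    by apply/set0Pn; rewrite -card_gt0; apply: leq_trans Hk.
  have [c1 Hc1 Hmax] := @arg_maxnP _ c0 (fun i => i \in ch T r) (G T) Hc0.
  have HA1 : #|ch T r :\ c1| = #|ch T r| - 1 by rewrite cD1.
  case: (boolP [exists i in ch T r :\ c1, ch T i != set0]).
    case/exists_inP => i Hi Hni.
    have Hic : i \in ch T r by move: Hi; rewrite in_setD1 => /andP [].
    have Hic1 : i != c1 by move: Hi; rewrite in_setD1 => /andP [].
    have [j Hj] : exists j, j \in (ch T r :\ c1) :\ i.
      apply/set0Pn; rewrite -card_gt0 (cD1 Hi) HA1.
      by clear -Hk; lia.
    move: Hj; rewrite !in_setD1 => /and3P [Hji Hjc1 Hjr].
    apply: (A_better Hic Hjr); first by rewrite eq_sym.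
    have Hc1' : c1 \in (ch T r :\ j) :\ i by rewrite !in_setD1 eq_sym Hic1 eq_sym Hjc1 Hc1.
    have HQ := prod_ge_factor (fun c => G T c) Hc1'.
    have Hm : G T i <= G T c1 := Hmax i Hic.
    have Hs : 0 < \sum_(c in ch T i) G T c.
      case/set0Pn: Hni => e He; rewrite (bigD1 e) //=.
      by apply: leq_trans (G_gt0 T e) (leq_addr _ _).
    move: HQ Hm Hs; rewrite (G_rec T i).
    set Q := \prod_(c in (ch T r :\ j) :\ i) (G T c).+1.
    set s := \sum_(c in ch T i) G T c; set q := \prod_(c in ch T i) (G T c).+1.
    move=> HQ' Hm' Hs'; have HQs : Q <= Q * s := leq_pmulr Q Hs'.
    apply: (leq_trans _ HQs); apply: (leq_trans _ HQ'); rewrite ltnS.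
    by apply: leq_trans Hm'; apply: leq_addl.
  rewrite negb_exists_in => /forall_inP Hleaf.
  have Hleaf' : forall i, i \in ch T r :\ c1 -> ch T i = set0.
    by move=> i Hi; apply/eqP; have := Hleaf i Hi; rewrite negbK.
  case: (ltngtP #|ch T r| 3) => Hk3; first by clear -Hk Hk3; lia.
  + (* k >= 4 : gather *)
    have [l1 Hl1] : exists l1, l1 \in ch T r :\ c1.
      by apply/set0Pn; rewrite -card_gt0 HA1; clear -Hk3; lia.
    have [l2 Hl2] : exists l2, l2 \in (ch T r :\ c1) :\ l1.
      by apply/set0Pn; rewrite -card_gt0 (cD1 Hl1) HA1; clear -Hk3; lia.
    have [l3 Hl3] : exists l3, l3 \in ((ch T r :\ c1) :\ l1) :\ l2.
      by apply/set0Pn; rewrite -card_gt0 (cD1 Hl2) (cD1 Hl1) HA1; clear -Hk3; lia.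
    have L1 := Hleaf' _ Hl1.
    have L2 : ch T l2 = set0 by apply: Hleaf'; move: Hl2; rewrite !in_setD1 => /and3P [_ -> ->].
    have L3 : ch T l3 = set0 by apply: Hleaf'; move: Hl3; rewrite !in_setD1 => /and4P [_ _ -> ->].
    move: Hl1 Hl2 Hl3; rewrite !in_setD1.
    move=> /andP [N1c H1] /and3P [N21 N2c H2] /and4P [N32 N31 N3c H3].
    apply: (Ga_better H1 H2 H3 _ _ _ L1 L2 L3); try by rewrite eq_sym.
    set R := ((ch T r :\ l1) :\ l2) :\ l3.
    have Hc1R : c1 \in R by rewrite !in_setD1 !(eq_sym c1) N1c N2c N3c Hc1.
    case: (leqP 3 (G T c1)) => Hg.
      by apply: (leq_trans _ (prod_ge_factor (fun c => G T c) Hc1R)); rewrite ltnS.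
    have Lc1 := G_le2_leaf Hg.
    have Hall : forall e, e \in ch T r -> ch T e = set0.
      move=> e He; case: (eqVneq e c1) => [-> //|Hne]; apply: Hleaf'.
      by rewrite in_setD1 Hne.
    have Hsz' : #|V| = #|ch T r|.+1.
      by rewrite Hsz (eq_bigr (fun _ => 1)) ?sum_nat_const ?muln1 // => e He; apply: leaf_card; apply: Hall.
    have H2' : l2 \in ch T r :\ l1 by rewrite in_setD1 N21 H2.
    have H3' : l3 \in (ch T r :\ l1) :\ l2 by rewrite !in_setD1 N32 N31 H3.
    have HR : #|R| = #|ch T r| - 3.
      by rewrite /R (cD1 H3') (cD1 H2') (cD1 H1) -!subnDA.
    rewrite (eq_bigr (fun _ => 2)); last first.
      move=> e; rewrite !in_setD1 => /and4P [_ _ _ He]; by rewrite G_leaf // Hall.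
    rewrite prod_nat_const HR.
    have H4 : 4 <= #|ch T r| - 3 by move: H8; rewrite Hsz'; clear; lia.
    by apply: leq_trans (leq_pexp2l (isT : 0 < 2) H4).
  + (* k = 3 *)
    have : #|ch T r :\ c1| == 2 by rewrite HA1 Hk3.
    case/cards2P => l1 [l2 [N12 EA]].
    have Hl1 : l1 \in ch T r :\ c1 by rewrite EA !inE eqxx.
    have Hl2 : l2 \in ch T r :\ c1 by rewrite EA !inE eqxx orbT.
    have L1 := Hleaf' _ Hl1; have L2 := Hleaf' _ Hl2.
    move: (Hl1) (Hl2); rewrite !in_setD1 => /andP [N1c H1] /andP [N2c H2].
    have Hch : ch T r = [set c1; l1; l2].
      by rewrite -(setD1K Hc1) EA setUA.
    have Nc1 : c1 != l1 by rewrite eq_sym.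
    have Nc2 : c1 != l2 by rewrite eq_sym.
    have Hsc : 5 <= #|sub T c1|.
      move: Hsz; rewrite Hch -setUA !big_setU1 ?big_set1 ?inE ?negb_or ?Nc1 ?Nc2 ?N12 //=.
      rewrite (leaf_card L1) (leaf_card L2) => E; move: H8; rewrite E; clear; lia.
    case: (boolP [exists X in ch T c1, ch T X != set0]).
      case/exists_inP => X HX HnX.
      exact: (Sw_better Hch Nc1 Nc2 N12 L1 L2 HX (G_nonleaf HnX)).
    rewrite negb_exists_in => /forall_inP Hl.
    have Lc : forall e, e \in ch T c1 -> ch T e = set0.
      by move=> e He; apply/eqP; have := Hl e He; rewrite negbK.
    have Hm : 4 <= #|ch T c1| by move: Hsc; rewrite leaves_card.
    have [d Hd] : exists d, d \in ch T c1.
      by apply/set0Pn; rewrite -card_gt0; apply: leq_trans Hm.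
    exact: (Sp_better Hch Nc1 Nc2 N12 L1 L2 Hd Lc Hm).
Qed.

End Main.

Lemma minimal_not_better (V : finType) (T : rtree V) : minimal T -> ~ better T.
Proof.
move=> Hmin [T' HT'].
have := Hmin V T' (erefl _); rewrite !Icount_G; lia.
Qed.

Unset Implicit Arguments.
Set Strict Implicit.

Theorem lemma3p1 (V : finType) (T : rtree V) :
  minimal T ->
  (forall v : V, v != troot T -> #|children T v| != 1) /\
  (8 <= #|V| -> #|children T (troot T)| = 2).
Proof.
move=> Hmin; have Hnb := minimal_not_better Hmin; split.
  exact: part_i.
exact: part_ii.
Qed.
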